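(* Let $\mathbf e=(1,1)$, $X=[-\frac34,\frac54]^2$, $Y=[-10,10]^2$, and for $\rho>0$ define on $X\times Y$ $$\psi_\rho(x,y)=\Big(\frac{\|x\|^2}{2}-1\Big)^2-\frac{\|y-\mathbf e\|^2}{2}+\frac{x^\top y}{2}-\frac\rho2\big[\mathbf e^\top y-\|x\|^2\big]_+^2 .$$ For every $\rho>1$, the problem $\min_{x\in X}\max_{y\in Y}\psi_\rho(x,y)$ has a unique first-order minimax (stationary) point $(x,y)\in X\times Y$, i.e. a unique point satisfying $0\in\nabla_x\psi_\rho(x,y)+\mathcal N_X(x)$ and $0\in-\nabla_y\psi_\rho(x,y)+\mathcal N_Y(y)$, namely $$(x,y)=\Big(-\tfrac34\mathbf e,\ \tfrac{10+18\rho}{16+32\rho}\mathbf e\Big),$$ which converges to $(-\frac34\mathbf e,\frac9{16}\mathbf e)$ as $\rho\to\infty$.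
   Context: $[z]_+=\max\{z,0\}$. $\mathcal N_C(z)=\{v:\langle v,z'-z\rangle\le0\ \forall z'\in C\}$ is the normal cone of a convex set $C$ at $z\in C$. *)

(* Defs.v *)
From Stdlib Require Import Reals.
From Coquelicot Require Import Coquelicot.
Open Scope R_scope.

Definition dot (u v : R * R) : R := fst u * fst v + snd u * snd v.
Definition nsq (u : R * R) : R := dot u u.
Definition e : R * R := (1, 1).
Definition vsub (u v : R * R) : R * R := (fst u - fst v, snd u - snd v).
Definition vscale (c : R) (u : R * R) : R * R := (c * fst u, c * snd u).

Definition pos (z : R) : R := Rmax z 0.

Definition inX (x : R * R) : Prop :=
  -3/4 <= fst x <= 5/4 /\ -3/4 <= snd x <= 5/4.
Definition inY (y : R * R) : Prop :=
  -10 <= fst y <= 10 /\ -10 <= snd y <= 10.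

Definition in_normal_cone (C : R * R -> Prop) (z v : R * R) : Prop :=
  C z /\ forall z', C z' -> dot v (vsub z' z) <= 0.

Definition psi (rho : R) (x y : R * R) : R :=
  (nsq x / 2 - 1) ^ 2 - nsq (vsub y e) / 2 + dot x y / 2
  - rho / 2 * (pos (dot e y - nsq x)) ^ 2.

(* Gradients, via partial derivatives (psi is C^1). *)
Definition grad_x (rho : R) (x y : R * R) : R * R :=
  (Derive (fun t => psi rho (t, snd x) y) (fst x),
   Derive (fun t => psi rho (fst x, t) y) (snd x)).
Definition grad_y (rho : R) (x y : R * R) : R * R :=
  (Derive (fun t => psi rho x (t, snd y)) (fst y),
   Derive (fun t => psi rho x (fst y, t)) (snd y)).

(* First-order minimax (stationary) point:
   0 ∈ ∇_x psi + N_X(x)   i.e.  -∇_x psi ∈ N_X(x),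
   0 ∈ -∇_y psi + N_Y(y)  i.e.   ∇_y psi ∈ N_Y(y). *)
Definition stationary (rho : R) (x y : R * R) : Prop :=
  in_normal_cone inX x (vscale (-1) (grad_x rho x y)) /\
  in_normal_cone inY y (grad_y rho x y).

Definition ystar (rho : R) : R := (10 + 18 * rho) / (16 + 32 * rho).

(* Main.v *)
Require Import Defs.
From Stdlib Require Import Reals Lra Psatz.
From mathcomp Require Import ssreflect.
From Coquelicot Require Import Coquelicot.
Open Scope R_scope.
Local Notation pos := Defs.pos.

Lemma pos2_bound z h : Rabs (pos (z+h) ^ 2 - pos z ^ 2 - 2 * pos z * h) <= h * h.
Proof.
  unfold pos, Rmax.
  destruct (Rle_dec (z+h) 0); destruct (Rle_dec z 0); apply Rabs_le; split; nra.
Qed.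

Lemma deriv_pos2 z : derivable_pt_lim (fun z => pos z ^ 2) z (2 * pos z).
Proof.
  intros eps Heps. exists (mkposreal eps Heps). intros h Hh0 Hh. simpl in Hh.
  replace ((pos (z + h) ^ 2 - pos z ^ 2) / h - 2 * pos z)
    with ((pos (z+h) ^ 2 - pos z ^ 2 - 2 * pos z * h) / h) by (field; auto).
  unfold Rdiv. rewrite Rabs_mult Rabs_inv.
  have := pos2_bound z h.
  have Hp : 0 < Rabs h by apply Rabs_pos_lt.
  intro B.
  apply Rle_lt_trans with (h*h * / Rabs h).
  - apply Rmult_le_compat_r; [left; apply Rinv_0_lt_compat; lra | lra].
  - replace (h*h) with (Rabs h * Rabs h).
    + field_simplify; lra.
    + rewrite <- Rabs_mult. apply Rabs_pos_eq. nra.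
Qed.

Lemma pos2_comp f x l : is_derive f x l ->
  is_derive (fun t => pos (f t) ^ 2) x (2 * pos (f x) * l).
Proof.
  intro H.
  have H1 := is_derive_comp (fun z => pos z ^ 2) f x _ _
     (proj2 (is_derive_Reals _ _ _) (deriv_pos2 (f x))) H.
  replace (2 * pos (f x) * l) with (scal l (2 * pos (f x))); [exact H1|].
  unfold scal; simpl; unfold mult; simpl. ring.
Qed.

Lemma dpsi_gen (A q : R -> R) (rho x dA dq : R) :
  is_derive A x dA -> is_derive q x dq ->
  is_derive (fun t => A t - rho/2 * pos (q t)^2) x (dA - rho/2*(2*pos (q x)*dq)).
Proof.
  intros HA Hq.
  apply: (is_derive_minus A (fun t => rho/2 * pos (q t)^2)); [exact HA|].
  apply is_derive_scal. apply pos2_comp. exact Hq.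
Qed.

Lemma is_derive_eq (f : R -> R) x (l l' : R) : l' = l -> is_derive f x l' -> is_derive f x l.
Proof. intros ->; auto. Qed.

Ltac finish_d q :=
  replace (_ + _ - _ : R) with q by ring;
  generalize (pos q); intro PP; change RinvImpl.Rinv with Rinv; field.

Lemma dx1 rho a b c d : Derive (fun t => psi rho (t,b) (c,d)) a =
  a*(a*a+b*b-2) + c/2 + 2*rho*pos(c+d-(a*a+b*b))*a.
Proof.
  apply is_derive_unique.
  unfold psi, nsq, dot, vsub, e; cbn [fst snd].
  eapply is_derive_eq; last first.
  apply (dpsi_gen (fun t => ((t*t+b*b)/2-1)^2 - ((c-1)*(c-1)+(d-1)*(d-1))/2 + (t*c+b*d)/2)
                  (fun t => 1*c+1*d - (t*t+b*b))).
  - auto_derive; [trivial| reflexivity].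
  - auto_derive; [trivial| reflexivity].
  - replace (c+d-(a*a+b*b)) with (1*c+1*d-(a*a+b*b)) by ring.
    generalize (pos (1*c+1*d-(a*a+b*b))); intro P. change RinvImpl.Rinv with Rinv. field.
Qed.

Lemma dx2 rho a b c d : Derive (fun t => psi rho (a,t) (c,d)) b =
  b*(a*a+b*b-2) + d/2 + 2*rho*pos(c+d-(a*a+b*b))*b.
Proof.
  apply is_derive_unique.
  unfold psi, nsq, dot, vsub, e; cbn [fst snd].
  eapply is_derive_eq; last first.
  apply (dpsi_gen (fun t => ((a*a+t*t)/2-1)^2 - ((c-1)*(c-1)+(d-1)*(d-1))/2 + (a*c+t*d)/2)
                  (fun t => 1*c+1*d - (a*a+t*t))).
  - auto_derive; [trivial| reflexivity].
  - auto_derive; [trivial| reflexivity].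
  - replace (c+d-(a*a+b*b)) with (1*c+1*d-(a*a+b*b)) by ring.
    generalize (pos (1*c+1*d-(a*a+b*b))); intro P. change RinvImpl.Rinv with Rinv. field.
Qed.

Lemma dy1 rho a b c d : Derive (fun t => psi rho (a,b) (t,d)) c =
  1 - c + a/2 - rho*pos(c+d-(a*a+b*b)).
Proof.
  apply is_derive_unique.
  unfold psi, nsq, dot, vsub, e; cbn [fst snd].
  eapply is_derive_eq; last first.
  apply (dpsi_gen (fun t => ((a*a+b*b)/2-1)^2 - ((t-1)*(t-1)+(d-1)*(d-1))/2 + (a*t+b*d)/2)
                  (fun t => 1*t+1*d - (a*a+b*b))).
  - auto_derive; [trivial| reflexivity].
  - auto_derive; [trivial| reflexivity].
  - replace (c+d-(a*a+b*b)) with (1*c+1*d-(a*a+b*b)) by ring.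
    generalize (pos (1*c+1*d-(a*a+b*b))); intro P. change RinvImpl.Rinv with Rinv. field.
Qed.

Lemma dy2 rho a b c d : Derive (fun t => psi rho (a,b) (c,t)) d =
  1 - d + b/2 - rho*pos(c+d-(a*a+b*b)).
Proof.
  apply is_derive_unique.
  unfold psi, nsq, dot, vsub, e; cbn [fst snd].
  eapply is_derive_eq; last first.
  apply (dpsi_gen (fun t => ((a*a+b*b)/2-1)^2 - ((c-1)*(c-1)+(t-1)*(t-1))/2 + (a*c+b*t)/2)
                  (fun t => 1*c+1*t - (a*a+b*b))).
  - auto_derive; [trivial| reflexivity].
  - auto_derive; [trivial| reflexivity].
  - replace (c+d-(a*a+b*b)) with (1*c+1*d-(a*a+b*b)) by ring.
    generalize (pos (1*c+1*d-(a*a+b*b))); intro P. change RinvImpl.Rinv with Rinv. field.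
Qed.
Lemma ncX a b v1 v2 : in_normal_cone inX (a,b) (v1,v2) ->
  (a < 5/4 -> v1 <= 0) /\ (-3/4 < a -> 0 <= v1) /\
  (b < 5/4 -> v2 <= 0) /\ (-3/4 < b -> 0 <= v2).
Proof.
  intros [[Ha Hb] H]; cbn [fst snd] in Ha, Hb.
  have H1 := H (5/4, b). have H2 := H (-3/4, b).
  have H3 := H (a, 5/4). have H4 := H (a, -3/4).
  unfold inX, dot, vsub in *; cbn [fst snd] in *.
  repeat split; intros; [ have := H1 ltac:(lra) | have := H2 ltac:(lra)
   | have := H3 ltac:(lra) | have := H4 ltac:(lra)]; intro; nra.
Qed.

Lemma ncY a b v1 v2 : in_normal_cone inY (a,b) (v1,v2) ->
  (a < 10 -> v1 <= 0) /\ (-10 < a -> 0 <= v1) /\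
  (b < 10 -> v2 <= 0) /\ (-10 < b -> 0 <= v2).
Proof.
  intros [[Ha Hb] H]; cbn [fst snd] in Ha, Hb.
  have H1 := H (10, b). have H2 := H (-10, b).
  have H3 := H (a, 10). have H4 := H (a, -10).
  unfold inY, dot, vsub in *; cbn [fst snd] in *.
  repeat split; intros; [ have := H1 ltac:(lra) | have := H2 ltac:(lra)
   | have := H3 ltac:(lra) | have := H4 ltac:(lra)]; intro; nra.
Qed.

Lemma key rho a b S : 1 < rho -> -3/4 <= a <= 5/4 -> -3/4 <= b <= 5/4 -> b <= a ->
  S * (1 + 2*rho) = 2 + (a+b)/2 - (a*a+b*b) ->
  a*(a*a+b*b-2+2*rho*S) + (1 + a/2 - rho*S)/2 > 0.
Proof.
  intros Hr Ha Hb Hab HS.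
  set D := 2 + (a+b)/2 - (a*a+b*b) in HS.
  have HD : 1/8 <= D by (unfold D; nra).
  set ep := 1/(2*(1+2*rho)).
  have Hep : 0 < ep < 1/6.
  { unfold ep; split; [apply Rdiv_lt_0_compat; lra|].
    apply (Rmult_lt_reg_r (2*(1+2*rho))); [lra|]. field_simplify; lra. }
  have HrS : rho * S = (1/2 - ep) * D.
  { rewrite -HS. unfold ep. field. lra. }
  have Hid : a*(a*a+b*b-2+2*rho*S) + (1 + a/2 - rho*S)/2 =
     (3*a*a+2*a*b+b*b)/4+(a-b)/8 + ep*D*(1/2-2*a).
  { replace (2*rho*S) with (2*(rho*S)) by ring. rewrite HrS. unfold D, ep. field. lra. }
  rewrite Hid.
  have HG0 : 0 <= (3*a*a+2*a*b+b*b)/4+(a-b)/8 by nra.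
  destruct (Rlt_le_dec a (1/4)) as [Hlt|Hge].
  - have : 0 < ep * D * (1/2 - 2*a).
    { apply Rmult_lt_0_compat; [apply Rmult_lt_0_compat|]; lra. }
    lra.
  - have Hm : 0 <= (1/6 - ep) * (D * (2*a - 1/2)).
    { apply Rmult_le_pos; [lra|apply Rmult_le_pos; lra]. }
    have : (3*a*a+2*a*b+b*b)/4+(a-b)/8 - (2+(a+b)/2-(a*a+b*b))*(2*a-1/2)/6 > 0.
    { assert (0 <= (a-1/4)*((b-1/4)*(b-1/4))) by (apply Rmult_le_pos; [lra| apply Rle_0_sqr]).
      assert (0 <= (a-1/4)*((a-1/4)*(a-1/4))) by (apply Rmult_le_pos; [lra| apply Rle_0_sqr]).
      assert (0 <= (b+a-1/4)*(b+a-1/4)) by apply Rle_0_sqr.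
      assert (0 < (a-1/4)*(a-1/4)/2 - 5*(a-1/4)/24 + 5/64) by nra.
      nra. }
    fold D. nra.
Qed.

Lemma pos_facts z : 0 <= pos z /\ z <= pos z /\ (0 < z -> pos z = z) /\ (z <= 0 -> pos z = 0).
Proof.
  unfold pos, Rmax; destruct (Rle_dec z 0); repeat split; intros; lra.
Qed.

Lemma core rho a b c d : 1 < rho ->
  -3/4 <= a <= 5/4 -> -3/4 <= b <= 5/4 -> -10 <= c <= 10 -> -10 <= d <= 10 ->
  let P := pos (c+d-(a*a+b*b)) in
  let g1 := a*(a*a+b*b-2) + c/2 + 2*rho*P*a in
  let g2 := b*(a*a+b*b-2) + d/2 + 2*rho*P*b in
  let h1 := 1 - c + a/2 - rho*P in
  let h2 := 1 - d + b/2 - rho*P in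
  (a < 5/4 -> -1*g1 <= 0) -> (-3/4 < a -> 0 <= -1*g1) ->
  (b < 5/4 -> -1*g2 <= 0) -> (-3/4 < b -> 0 <= -1*g2) ->
  (c < 10 -> h1 <= 0) -> (-10 < c -> 0 <= h1) ->
  (d < 10 -> h2 <= 0) -> (-10 < d -> 0 <= h2) ->
  a = -3/4 /\ b = -3/4 /\ c = ystar rho /\ d = ystar rho.
Proof.
  intros Hr Ha Hb Hc Hd P g1 g2 h1 h2 Xa1 Xa2 Xb1 Xb2 Yc1 Yc2 Yd1 Yd2.
  have [P0 [PS [Ppos Pneg]]] := pos_facts (c+d-(a*a+b*b)).
  fold P in P0, PS, Ppos, Pneg.
  have rP : 0 <= rho * P by nra.
  have Ec : h1 = 0.
  { destruct (Rlt_le_dec c 10); destruct (Rlt_le_dec (-10) c).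
    - have := Yc1 r; have := Yc2 r0; lra.
    - have HP : P = 0 by (apply Pneg; nra).
      have := Yc1 r. unfold h1. rewrite HP. lra.
    - have := Yc2 r0. unfold h1. lra.
    - lra. }
  have Ed : h2 = 0.
  { destruct (Rlt_le_dec d 10); destruct (Rlt_le_dec (-10) d).
    - have := Yd1 r; have := Yd2 r0; lra.
    - have HP : P = 0 by (apply Pneg; nra).
      have := Yd1 r. unfold h2. rewrite HP. lra.
    - have := Yd2 r0. unfold h2. lra.
    - lra. }
  unfold h1 in Ec; unfold h2 in Ed.
  have HS : 0 < c+d-(a*a+b*b).
  { destruct (Rlt_le_dec 0 (c+d-(a*a+b*b))) as [h|h]; [exact h|].
    have HP := Pneg h. rewrite HP in Ec Ed. nra. }
  have HP := Ppos HS.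
  set S := c+d-(a*a+b*b) in HP HS.
  have HSeq : S * (1 + 2*rho) = 2 + (a+b)/2 - (a*a+b*b).
  { unfold S in *. rewrite HP in Ec Ed. nra. }
  have Hc' : c = 1 + a/2 - rho*S by (rewrite -HP; lra).
  have Hd' : d = 1 + b/2 - rho*S by (rewrite -HP; lra).
  have Hab : a = -3/4 /\ b = -3/4.
  { destruct (Rle_lt_dec b a) as [hab|hab].
    - have K := key rho a b S Hr Ha Hb hab HSeq.
      have Hg1 : g1 > 0 by (unfold g1; rewrite HP Hc'; lra).
      destruct (Rlt_le_dec (-3/4) a) as [h|h]; [have := Xa2 h; lra|]. lra.
    - have K := key rho b a S Hr Hb Ha ltac:(lra) ltac:(rewrite HSeq; nra).
      have Hg2 : g2 > 0.
      { unfold g2; rewrite HP Hd'.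
        replace (b * (a * a + b * b - 2) + (1 + b / 2 - rho * S) / 2 + 2 * rho * S * b)
          with (b * (b * b + a * a - 2 + 2 * rho * S) + (1 + b / 2 - rho * S) / 2) by ring.
        lra. }
      destruct (Rlt_le_dec (-3/4) b) as [h|h]; [have := Xb2 h; lra|]. lra. }
  destruct Hab as [-> ->].
  have HS2 : S = 1/(8*(1+2*rho)).
  { apply (Rmult_eq_reg_r (1+2*rho)); [|lra]. rewrite HSeq. field. lra. }
  unfold ystar. rewrite Hc' Hd' HS2. split; [|split]; auto; split; field; lra.
Qed.
Lemma lim : is_lim ystar p_infty (9/16).
Proof.
  apply is_lim_ext_loc with (f := fun x => 9/16 + /(16+32*x)).
  - exists 0. intros y Hy. unfold ystar. field. lra.
  - have H2 : is_lim (fun x => 32*x) p_infty p_infty.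
    { have := is_lim_scal_l (fun x => x) 32 p_infty p_infty (is_lim_id p_infty).
      simpl. case: Rle_dec; [|lra]. intro. case: Rle_lt_or_eq_dec; [auto|lra]. }
    have H1 : is_lim (fun x => 16 + 32*x) p_infty p_infty.
    { eapply is_lim_plus. apply is_lim_const. exact H2. simpl. auto. reflexivity. }
    have H3 := is_lim_inv _ _ _ H1 ltac:(discriminate).
    have H4 := is_lim_plus' _ _ p_infty (9/16) 0 (is_lim_const (9/16) p_infty) H3.
    replace (Finite (9/16)) with (Finite (9/16+0)) by (f_equal; ring). exact H4.
Qed.

Theorem lemma4p1 :
  (forall rho : R, 1 < rho ->
     forall x y : R * R,
       stationary rho x y <->
       (x = vscale (-3/4) e /\ y = vscale (ystar rho) e))
  /\ is_lim ystar p_infty (9/16).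
Proof.
  split; [|exact lim].
  intros rho Hr [a b] [c d]. split.
  - intros [HX HY]. unfold grad_x, grad_y, vscale in HX, HY; cbn [fst snd] in HX, HY.
    rewrite dx1 dx2 in HX. rewrite dy1 dy2 in HY.
    have [[Ha Hb] _] := HX. have [[Hc Hd] _] := HY. cbn [fst snd] in Ha, Hb, Hc, Hd.
    have [X1 [X2 [X3 X4]]] := ncX _ _ _ _ HX.
    have [Y1 [Y2 [Y3 Y4]]] := ncY _ _ _ _ HY.
    have [-> [-> [-> ->]]] := core rho a b c d Hr Ha Hb Hc Hd X1 X2 X3 X4 Y1 Y2 Y3 Y4.
    unfold vscale, e; cbn [fst snd]. split; f_equal; ring.
  - intros [Hx Hy]. unfold vscale, e in Hx, Hy; cbn [fst snd] in Hx, Hy.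
    injection Hx as -> ->. injection Hy as -> ->.
    unfold stationary, grad_x, grad_y, vscale; cbn [fst snd].
    rewrite dx1 dx2 dy1 dy2.
    set s := 1/(8*(1+2*rho)).
    have Hs : 0 < s by (unfold s; apply Rdiv_lt_0_compat; lra).
    have Hrs : rho * s < 1/16.
    { unfold s. apply (Rmult_lt_reg_r (8*(1+2*rho))); [lra|]. field_simplify; lra. }
    have Ht : ystar rho = 5/8 - rho*s by (unfold ystar, s; field; lra).
    have HS : ystar rho * 1 + ystar rho * 1 - (-3/4*1*(-3/4*1) + -3/4*1*(-3/4*1)) = s.
    { rewrite Ht. unfold s. field. lra. }
    rewrite HS.
    have [_ [_ [Pp _]]] := pos_facts s. rewrite (Pp Hs).
    rewrite Ht. clearbody s.
    split; split.
    + unfold inX; cbn [fst snd]; lra.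
    + intros [z1 z2] [Hz1 Hz2]; unfold dot, vsub; cbn [fst snd] in *. nra.
    + unfold inY; cbn [fst snd]; split; nra.
    + intros [z1 z2] [Hz1 Hz2]; unfold dot, vsub; cbn [fst snd] in *. nra.
Qed.
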